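(* The DSRT$_{\mathsf{A}}$-definable transformations are closed under intersection and composition, but not closed under union.
   Context: A linear group is a triple $\mathbf{G}=(D,\leq,+)$ where $D$ is an infinite set, $\leq$ is a total order on $D$, and $(D,+)$ is a group with identity $0$. For finite label sets $\Sigma,\Gamma$, a $(\Sigma,\Gamma,\mathbf{G})$-streaming register transducer (SRT) is a tuple $\mathcal{S}=(Q,q_0,k,R_0,\Delta)$: $Q$ finite set of states, $q_0\in Q$, $k\in\mathbb{N}$ registers, initial values $R_0\in D^k$, and transitions $\Delta\subseteq Q\times\Sigma\times\{>,=,<\}^k\times\{\mathsf{old},\mathsf{new},\mathsf{add}\}^k\times\{1,\dots,k\}\times\Gamma\times Q$. A transition $(q,\sigma,l,m,u,\gamma,q')$ enables the step $(q,R)\xrightarrow[(\gamma,d')]{(\sigma,d)}(q',R')$ iff (1) for every $i$, $d>R[i]$, $d=R[i]$ or $d<R[i]$ according as $l[i]$ is $>$, $=$, $<$; (2) $R'[i]=R[i]$, $d$, or $R[i]+d$ according as $m[i]$ is $\mathsf{old}$, $\mathsf{new}$, $\mathsf{add}$; (3) $d'=R'[u]$. A run over $s\in(\Sigma\times D)^*$ of length $n$ generating $t\in(\Gamma\times D)^*$ is a sequence of $n$ enabled steps from $(q_0,R_0)$ reading $s[i]$ and emitting $t[i]$. $s\otimes t$ is the word with $i$-th letter $(s[i],t[i])$; $[\![\mathcal{S}]\!]=\{s\otimes t:\text{there is a run over }s\text{ generating }t\}$. An SRT is deterministic if any two distinct transitions $(q_1,\sigma_1,l_1,\dots)$, $(q_2,\sigma_2,l_2,\dots)$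 satisfy $q_1\neq q_2$ or $\sigma_1\neq\sigma_2$ or $l_1\neq l_2$; it is add-free if all update vectors lie in $\{\mathsf{old},\mathsf{new}\}^k$. A DSRT$_{\mathsf{A}}$ is a deterministic add-free SRT; a transformation is DSRT$_{\mathsf{A}}$-definable if it equals $[\![\mathcal{S}]\!]$ for some DSRT$_{\mathsf{A}}$ $\mathcal{S}$. Union and intersection are taken for transducers of the same signature $(\Sigma,\Gamma,\mathbf{G})$. Composition: for $\mathcal{T}_1$ over $(\Sigma\times D)\times(\Gamma\times D)$ and $\mathcal{T}_2$ over $(\Gamma\times D)\times(\Theta\times D)$, $\mathcal{T}_1\cdot\mathcal{T}_2$ is the set of $s_1\otimes s_2$ ($s_1\in(\Sigma\times D)^*$, $s_2\in(\Theta\times D)^*$) such that some $s_3\in(\Gamma\times D)^*$ has $s_1\otimes s_3\in\mathcal{T}_1$ and $s_3\otimes s_2\in\mathcal{T}_2$. *)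

(* Defs.v *)
From mathcomp Require Import all_boot.
Set Implicit Arguments. Unset Strict Implicit. Unset Printing Implicit Defensive.

Record linear_group := LinearGroup {
  lg_D :> Type;
  lg_le : lg_D -> lg_D -> Prop;
  lg_add : lg_D -> lg_D -> lg_D;
  lg_zero : lg_D;
  lg_opp : lg_D -> lg_D;
  lg_infinite : forall l : seq lg_D, exists d, forall i, i < size l -> nth d l i <> d;
  lg_le_refl : forall x, lg_le x x;
  lg_le_trans : forall x y z, lg_le x y -> lg_le y z -> lg_le x z;
  lg_le_anti : forall x y, lg_le x y -> lg_le y x -> x = y;
  lg_le_total : forall x y, lg_le x y \/ lg_le y x;
  lg_addA : forall x y z, lg_add x (lg_add y z) = lg_add (lg_add x y) z;
  lg_add0l : forall x, lg_add lg_zero x = x;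
  lg_add0r : forall x, lg_add x lg_zero = x;
  lg_addNl : forall x, lg_add (lg_opp x) x = lg_zero;
  lg_addNr : forall x, lg_add x (lg_opp x) = lg_zero
}.

Definition lg_lt (G : linear_group) (x y : G) : Prop := lg_le x y /\ x <> y.

Inductive cmp := CGt | CEq | CLt.
Inductive upd := UOld | UNew | UAdd.

(** Transitions: Delta q sigma l m u gamma q' holds iff
    (q,sigma,l,m,u,gamma,q') is in the transition relation.
    Registers are indexed by 'I_k (i.e. 1..k shifted to 0..k-1). *)
Record srt (G : linear_group) (Sigma Gamma : Type) := SRT {
  srt_Q : finType;
  srt_q0 : srt_Q;
  srt_k : nat;
  srt_R0 : 'I_srt_k -> G;
  srt_Delta : srt_Q -> Sigma -> ('I_srt_k -> cmp) -> ('I_srt_k -> upd) ->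
              'I_srt_k -> Gamma -> srt_Q -> Prop
}.

Arguments srt_Delta {G Sigma Gamma} s _ _ _ _ _ _ _.
Arguments srt_q0 {G Sigma Gamma} s.
Arguments srt_R0 {G Sigma Gamma} s _.
Arguments srt_k {G Sigma Gamma} s.
Arguments srt_Q {G Sigma Gamma} s.

Section Semantics.
Variables (G : linear_group) (Sigma Gamma : Type) (S : srt G Sigma Gamma).

Definition guard_holds (c : cmp) (d r : G) : Prop :=
  match c with
  | CGt => lg_lt r d
  | CEq => d = r
  | CLt => lg_lt d r
  end.

Definition upd_val (u : upd) (r d : G) : G :=
  match u with
  | UOld => r
  | UNew => d
  | UAdd => lg_add r d
  end.

Definition step (q : srt_Q S) (R : 'I_(srt_k S) -> G)
    (inp : Sigma * G) (out : Gamma * G)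
    (q' : srt_Q S) (R' : 'I_(srt_k S) -> G) : Prop :=
  exists l m u,
    srt_Delta S q inp.1 l m u out.1 q' /\
    (forall i, guard_holds (l i) inp.2 (R i)) /\
    (forall i, R' i = upd_val (m i) (R i) inp.2) /\
    out.2 = R' u.

(** runs_from q R w : there is a run from (q,R) over the input word
    unzip1 w generating unzip2 w (w = s (x) t). *)
Fixpoint runs_from (q : srt_Q S) (R : 'I_(srt_k S) -> G)
    (w : seq ((Sigma * G) * (Gamma * G))) : Prop :=
  match w with
  | [::] => True
  | (inp, out) :: w' =>
      exists q' R', step q R inp out q' R' /\ runs_from q' R' w'
  end.

Definition sem (w : seq ((Sigma * G) * (Gamma * G))) : Prop :=
  runs_from (srt_q0 S) (srt_R0 S) w.

Definition deterministic : Prop :=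
  forall q1 s1 l1 m1 u1 g1 p1 q2 s2 l2 m2 u2 g2 p2,
    srt_Delta S q1 s1 l1 m1 u1 g1 p1 ->
    srt_Delta S q2 s2 l2 m2 u2 g2 p2 ->
    (q1, s1, l1, m1, u1, g1, p1) <> (q2, s2, l2, m2, u2, g2, p2) ->
    q1 <> q2 \/ s1 <> s2 \/ l1 <> l2.

Definition add_free : Prop :=
  forall q s l m u g p, srt_Delta S q s l m u g p -> forall i, m i <> UAdd.

Definition DSRT_A : Prop := deterministic /\ add_free.

End Semantics.

Definition transformation (G : linear_group) (Sigma Gamma : Type) :=
  seq ((Sigma * G) * (Gamma * G)) -> Prop.

Definition DSRT_A_definable (G : linear_group) (Sigma Gamma : finType)
    (T : transformation G Sigma Gamma) : Prop :=
  exists S : srt G Sigma Gamma, DSRT_A S /\ forall w, T w <-> sem S w.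

Definition trans_union G Sigma Gamma (T1 T2 : transformation G Sigma Gamma)
  : transformation G Sigma Gamma := fun w => T1 w \/ T2 w.

Definition trans_inter G Sigma Gamma (T1 T2 : transformation G Sigma Gamma)
  : transformation G Sigma Gamma := fun w => T1 w /\ T2 w.

Definition trans_comp G Sigma Gamma Theta
    (T1 : transformation G Sigma Gamma) (T2 : transformation G Gamma Theta)
  : transformation G Sigma Theta :=
  fun w => exists s3 : seq (Gamma * G), size s3 = size w /\
      T1 (zip (unzip1 w) s3) /\ T2 (zip s3 (unzip2 w)).

(* Main.v *)
Require Import Defs.
From mathcomp Require Import all_boot.
From Stdlib Require Import Classical ClassicalEpsilon FunctionalExtensionality.
Set Implicit Arguments. Unset Strict Implicit. Unset Printing Implicit Defensive.

Section Basics.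
Variable G : linear_group.

Lemma lt_irr (x : G) : ~ lg_lt x x.
Proof. by case. Qed.

Lemma lt_asym (x y : G) : lg_lt x y -> lg_lt y x -> False.
Proof. by move=> [h1 n1] [h2 _]; apply: n1; apply: lg_le_anti. Qed.

Lemma guard_uniq c c' (d r : G) :
  guard_holds c d r -> guard_holds c' d r -> c = c'.
Proof.
case: c; case: c' => //= h1 h2;
  try (by exfalso; apply: (lt_asym h1 h2)); try (by exfalso; apply: (lt_asym h2 h1));
  subst; exfalso; (apply: (lt_irr h1) || apply: (lt_irr h2)).
Qed.

Definition cmp_of (d r : G) : cmp :=
  if excluded_middle_informative (lg_lt r d) then CGt
  else if excluded_middle_informative (d = r) then CEq else CLt.

Lemma cmp_ofP d r : guard_holds (cmp_of d r) d r.
Proof.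
rewrite /cmp_of; case: excluded_middle_informative => // h1.
case: excluded_middle_informative => // h2 /=.
split=> //; case: (lg_le_total d r) => // h3; exfalso; apply: h1; split=> //.
by move=> e; apply: h2.
Qed.

Definition flip (c : cmp) := match c with CGt => CLt | CEq => CEq | CLt => CGt end.

Lemma flipP c (d r : G) : guard_holds c d r -> guard_holds (flip c) r d.
Proof. by case: c => //= ->. Qed.

Lemma guard_eq c (x y : G) : guard_holds c x y -> (c = CEq <-> x = y).
Proof.
case: c => /= h; split=> // e; subst; exfalso; exact: lt_irr h.
Qed.

End Basics.

Definition o2c (o : 'I_3) : cmp :=
  match val o with 0 => CGt | 1 => CEq | _ => CLt end.
Definition c2o (c : cmp) : 'I_3 :=
  match c with CGt => inord 0 | CEq => inord 1 | CLt => inord 2 end.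
Lemma c2oK c : o2c (c2o c) = c.
Proof. by case: c; rewrite /o2c /= inordK. Qed.

Lemma det_eq G Sig Gam (S : srt G Sig Gam) : deterministic S ->
  forall q s l m u g p m' u' g' p',
  srt_Delta S q s l m u g p -> srt_Delta S q s l m' u' g' p' ->
  m = m' /\ u = u' /\ g = g' /\ p = p'.
Proof.
move=> D q s l m u g p m' u' g' p' h1 h2.
case: (classic ((q, s, l, m, u, g, p) = (q, s, l, m', u', g', p'))).
  by case=> -> -> -> ->.
by move=> ne; case: (D _ _ _ _ _ _ _ _ _ _ _ _ _ _ h1 h2 ne) => [|[]].
Qed.

Lemma free_exists n1 n2 (g1 : 'I_n1 -> option 'I_(n1 + n2).+1)
  (g2 : 'I_n2 -> option 'I_(n1 + n2).+1) :
  exists a, [forall i, g1 i != Some a] && [forall j, g2 j != Some a].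
Proof.
apply/existsP; apply: contraT => H.
have sub : [set Some a | a in 'I_(n1 + n2).+1] \subset
   [set g1 i | i in 'I_n1] :|: [set g2 j | j in 'I_n2].
  apply/subsetP => o /imsetP [a _ ->].
  move: H; rewrite negb_exists => /forallP /(_ a).
  rewrite negb_and !negb_forall => /orP [/existsP [i /negPn /eqP Hi]|/existsP [j /negPn /eqP Hj]].
    by rewrite inE; apply/orP; left; apply/imsetP; exists i.
  by rewrite inE; apply/orP; right; apply/imsetP; exists j.
have := subset_leq_card sub.
rewrite card_imset; last by move=> x y [].
rewrite card_ord => h.
have h1 : #|[set g1 i | i in 'I_n1]| <= n1.
  by rewrite -[X in _ <= X]card_ord leq_imset_card.
have h2 : #|[set g2 j | j in 'I_n2]| <= n2.
  by rewrite -[X in _ <= X]card_ord leq_imset_card.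
have [h3 _] := leq_card_setU [set g1 i | i in 'I_n1] [set g2 j | j in 'I_n2].
have := leq_trans h (leq_trans h3 (leq_add h1 h2)).
by rewrite ltnn.
Qed.

Section Product.
Variables (G : linear_group) (Sig Gam1 Sig2 Gam2 : Type).
Variables (M1 : srt G Sig Gam1) (M2 : srt G Sig2 Gam2).
Variables (f : Sig -> Gam1 -> Sig2) (b c : bool) (ok : Gam1 -> Gam2 -> Prop).
Hypotheses (det1 : deterministic M1) (det2 : deterministic M2)
  (af1 : add_free M1) (af2 : add_free M2).

Local Notation k1 := (srt_k M1).
Local Notation k2 := (srt_k M2).
Local Notation K := (srt_k M1 + srt_k M2).+1.

Definition pstate : finType :=
  (srt_Q M1 * srt_Q M2 * {ffun 'I_k1 -> 'I_K} * {ffun 'I_k2 -> 'I_K}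
   * {ffun 'I_K * 'I_K -> 'I_3})%type.

Definition st_q1 (s : pstate) := s.1.1.1.1.
Definition st_q2 (s : pstate) := s.1.1.1.2.
Definition st_p1 (s : pstate) := s.1.1.2.
Definition st_p2 (s : pstate) := s.1.2.
Definition st_ord (s : pstate) := s.2.

Definition val_src (P : 'I_K -> G) (d : G) (o : option 'I_K) :=
  if o is Some a then P a else d.

Definition cmpsrc (ord : {ffun 'I_K * 'I_K -> 'I_3}) (l : 'I_K -> cmp)
  (o1 o2 : option 'I_K) : cmp :=
  match o1, o2 with
  | None, None => CEq
  | None, Some y => l y
  | Some x, None => flip (l x)
  | Some x, Some y => o2c (ord (x, y))
  end.

Definition s1f (p1 : {ffun 'I_k1 -> 'I_K}) (m1 : 'I_k1 -> upd) i : option 'I_K :=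
  if m1 i is UNew then None else Some (p1 i).
Definition esf p1 m1 (u1 : 'I_k1) := if b then s1f p1 m1 u1 else None.
Definition s2f p1 (p2 : {ffun 'I_k2 -> 'I_K}) m1 u1 (m2 : 'I_k2 -> upd) j :=
  if m2 j is UNew then esf p1 m1 u1 else Some (p2 j).
Definition astar p1 p2 m1 u1 m2 : 'I_K :=
  odflt ord0 [pick a | [forall i, s1f p1 m1 i != Some a] &&
                       [forall j, s2f p1 p2 m1 u1 m2 j != Some a]].
Definition srcP (a0 a : 'I_K) : option 'I_K := if a == a0 then None else Some a.

Lemma astar_free p1 p2 m1 u1 m2 (a0 := astar p1 p2 m1 u1 m2) :
  (forall i, s1f p1 m1 i <> Some a0) /\ (forall j, s2f p1 p2 m1 u1 m2 j <> Some a0).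
Proof.
rewrite /a0 /astar; case: pickP => [a /andP [/forallP h1 /forallP h2] | H].
  by split=> x; apply/eqP.
exfalso; have [a /andP [h1 h2]] :=
  free_exists (s1f p1 m1) (s2f p1 p2 m1 u1 m2).
by have := H a; rewrite h1 h2.
Qed.

Definition pDelta (st : pstate) (sg : Sig) (l : 'I_K -> cmp) (m : 'I_K -> upd)
  (u : 'I_K) (g : Gam2) (st' : pstate) : Prop :=
  exists m1 u1 g1 q1' m2 u2 q2',
   srt_Delta M1 (st_q1 st) sg (fun i => l (st_p1 st i)) m1 u1 g1 q1' /\
   srt_Delta M2 (st_q2 st) (f sg g1)
     (fun j => cmpsrc (st_ord st) l (esf (st_p1 st) m1 u1) (Some (st_p2 st j)))
     m2 u2 g q2' /\
   (c -> ok g1 g /\ cmpsrc (st_ord st) l (s1f (st_p1 st) m1 u1)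
                      (s2f (st_p1 st) (st_p2 st) m1 u1 m2 u2) = CEq) /\
   m = (fun a => if a == astar (st_p1 st) (st_p2 st) m1 u1 m2 then UNew else UOld) /\
   u = odflt (astar (st_p1 st) (st_p2 st) m1 u1 m2) (s2f (st_p1 st) (st_p2 st) m1 u1 m2 u2) /\
   st' = (q1', q2',
          [ffun i => odflt (astar (st_p1 st) (st_p2 st) m1 u1 m2) (s1f (st_p1 st) m1 i)],
          [ffun j => odflt (astar (st_p1 st) (st_p2 st) m1 u1 m2) (s2f (st_p1 st) (st_p2 st) m1 u1 m2 j)],
          [ffun ab => c2o (cmpsrc (st_ord st) l
                         (srcP (astar (st_p1 st) (st_p2 st) m1 u1 m2) ab.1)
                         (srcP (astar (st_p1 st) (st_p2 st) m1 u1 m2) ab.2))]).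

Definition P0 (a : 'I_K) : G :=
  match (insub (val a) : option 'I_k1) with
  | Some i => srt_R0 M1 i
  | None => match (insub (val a - k1) : option 'I_k2) with
            | Some j => srt_R0 M2 j
            | None => lg_zero G
            end
  end.

Definition pq0 : pstate :=
  (srt_q0 M1, srt_q0 M2, [ffun i : 'I_k1 => inord (val i)],
   [ffun j : 'I_k2 => inord (k1 + val j)],
   [ffun ab => c2o (cmp_of (P0 ab.1) (P0 ab.2))]).

Definition prod_srt : srt G Sig Gam2 := @SRT G Sig Gam2 pstate pq0 K P0 pDelta.

Lemma prod_det : deterministic prod_srt.
Proof.
move=> st s l m u g p st2 s2 l2 m' u' g' p' h1 h2 ne.
case: (classic (st = st2)) => [e1|]; last by left.
case: (classic (s = s2)) => [e2|]; last by right; left.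
case: (classic (l = l2)) => [e3|]; last by right; right.
subst; exfalso; apply: ne.
case: h1 => [m1 [u1 [g1 [q1' [m2 [u2 [q2' [D1 [D2 [_ [-> [-> ->]]]]]]]]]]]].
case: h2 => [m1' [u1' [g1' [q1'' [m2' [u2' [q2'' [D1' [D2' [_ [-> [-> ->]]]]]]]]]]]].
have [? [? [? ?]]] := det_eq det1 D1 D1'; subst.
have [? [? [? ?]]] := det_eq det2 D2 D2'; subst.
by [].
Qed.

Lemma prod_af : add_free prod_srt.
Proof.
move=> st s l m u g p [m1 [u1 [g1 [q1' [m2 [u2 [q2' [_ [_ [_ [-> _]]]]]]]]]]] i /=.
by case: ifP.
Qed.


Definition inv (st : pstate) (P : 'I_K -> G) q1 (R1 : 'I_k1 -> G) q2 (R2 : 'I_k2 -> G) :=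
  [/\ st_q1 st = q1, st_q2 st = q2, (forall i, R1 i = P (st_p1 st i)),
      (forall j, R2 j = P (st_p2 st j)) &
      (forall x y, guard_holds (o2c (st_ord st (x, y))) (P x) (P y))].

Lemma cmpsrc_ok (ord : {ffun 'I_K * 'I_K -> 'I_3}) (l : 'I_K -> cmp) (P : 'I_K -> G) (d : G) :
  (forall x y, guard_holds (o2c (ord (x, y))) (P x) (P y)) ->
  (forall x, guard_holds (l x) d (P x)) ->
  forall o1 o2, guard_holds (cmpsrc ord l o1 o2) (val_src P d o1) (val_src P d o2).
Proof. by move=> Ho Hl [x|] [y|] //=; apply: flipP. Qed.

Definition Pnew (a0 : 'I_K) (P : 'I_K -> G) (d : G) (a : 'I_K) :=
  upd_val (if a == a0 then UNew else UOld) (P a) d.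

Section Core.
Variables (st : pstate) (P : 'I_K -> G) (q1 : srt_Q M1) (R1 : 'I_k1 -> G)
  (q2 : srt_Q M2) (R2 : 'I_k2 -> G).
Hypothesis Hinv : inv st P q1 R1 q2 R2.
Variables (d : G) (l : 'I_K -> cmp).
Hypothesis Hl : forall x, guard_holds (l x) d (P x).
Variables (m1 : 'I_k1 -> upd) (u1 : 'I_k1) (m2 : 'I_k2 -> upd).
Hypotheses (Hm1 : forall i, m1 i <> UAdd) (Hm2 : forall j, m2 j <> UAdd).
Local Notation p1 := (st_p1 st).
Local Notation p2 := (st_p2 st).
Local Notation ord := (st_ord st).
Local Notation e := (if b then upd_val (m1 u1) (R1 u1) d else d).
Local Notation a0 := (astar p1 p2 m1 u1 m2).
Local Notation P' := (Pnew a0 P d).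

Lemma R1'_src i : upd_val (m1 i) (R1 i) d = val_src P d (s1f p1 m1 i).
Proof. case: Hinv => _ _ h1 _ _; rewrite /s1f h1; move: (@Hm1 i); by case: (m1 i). Qed.

Lemma e_src : e = val_src P d (esf p1 m1 u1).
Proof. by rewrite /esf; case: b => //; rewrite R1'_src. Qed.

Lemma guard2 j : guard_holds (cmpsrc ord l (esf p1 m1 u1) (Some (p2 j))) e (R2 j).
Proof.
case: Hinv => _ _ _ h2 ho; rewrite e_src h2.
exact: (cmpsrc_ok ho Hl (esf p1 m1 u1) (Some (p2 j))).
Qed.

Lemma R2'_src j : upd_val (m2 j) (R2 j) e = val_src P d (s2f p1 p2 m1 u1 m2 j).
Proof.
case: Hinv => _ _ _ h2 _; rewrite /s2f h2; move: (@Hm2 j).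
by case: (m2 j) => //= _; rewrite e_src.
Qed.

Lemma P'_odflt o : o <> Some a0 -> P' (odflt a0 o) = val_src P d o.
Proof.
rewrite /Pnew; case: o => [x|] /= h; last by rewrite eqxx.
by case: eqP => // ex; case: h; rewrite ex.
Qed.

Lemma P'_src a : P' a = val_src P d (srcP a0 a).
Proof. by rewrite /srcP /Pnew /=; case: eqP. Qed.

Lemma ord'_ok x y :
  guard_holds (o2c (c2o (cmpsrc ord l (srcP a0 x) (srcP a0 y)))) (P' x) (P' y).
Proof.
rewrite c2oK !P'_src; case: Hinv => _ _ _ _ ho; exact: cmpsrc_ok.
Qed.

Lemma R1'_P' i : upd_val (m1 i) (R1 i) d = P' (odflt a0 (s1f p1 m1 i)).
Proof. by rewrite P'_odflt ?R1'_src //; case: (astar_free p1 p2 m1 u1 m2). Qed.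

Lemma R2'_P' j : upd_val (m2 j) (R2 j) e = P' (odflt a0 (s2f p1 p2 m1 u1 m2 j)).
Proof. by rewrite P'_odflt ?R2'_src //; case: (astar_free p1 p2 m1 u1 m2). Qed.

Lemma check_ok u2 :
  cmpsrc ord l (s1f p1 m1 u1) (s2f p1 p2 m1 u1 m2 u2) = CEq <->
  upd_val (m1 u1) (R1 u1) d = upd_val (m2 u2) (R2 u2) e.
Proof.
rewrite R2'_src R1'_src; apply: guard_eq; case: Hinv => _ _ _ _ ho.
exact: cmpsrc_ok.
Qed.

End Core.

Definition jstep q1 R1 q2 R2 (inp : Sig * G) (out : Gam2 * G) q1' R1' q2' R2' :=
  exists g1 d1, step (S:=M1) q1 R1 inp (g1, d1) q1' R1' /\
    step (S:=M2) q2 R2 (f inp.1 g1, if b then d1 else inp.2) out q2' R2' /\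
    (c -> ok g1 out.1 /\ d1 = out.2).

Fixpoint jruns q1 R1 q2 R2 (w : seq ((Sig * G) * (Gam2 * G))) : Prop :=
  match w with
  | [::] => True
  | (inp, out) :: w' => exists q1' R1' q2' R2',
      jstep q1 R1 q2 R2 inp out q1' R1' q2' R2' /\ jruns q1' R1' q2' R2' w'
  end.

Lemma stepA st P q1 R1 q2 R2 sg d g e st' P' :
  inv st P q1 R1 q2 R2 -> step (S:=prod_srt) st P (sg, d) (g, e) st' P' ->
  exists q1' R1' q2' R2', jstep q1 R1 q2 R2 (sg, d) (g, e) q1' R1' q2' R2' /\
                          inv st' P' q1' R1' q2' R2'.
Proof.
move=> Hi [l [m [u [D [Hg [HP He]]]]]] /=.
case: D => [m1 [u1 [g1 [q1' [m2 [u2 [q2' [D1 [D2 [Hc [Em [Eu Est]]]]]]]]]]]].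
have Hm1 := af1 D1; have Hm2 := af2 D2.
simpl in Hg, He, HP, D1, D2, Hc.
case: (Hi) => ? ? _ _ _; subst q1 q2.
subst m u st'.
have {}HP : forall i, P' i = Pnew (astar (st_p1 st) (st_p2 st) m1 u1 m2) P d i := HP.
exists q1', (fun i => upd_val (m1 i) (R1 i) d), q2',
  (fun j => upd_val (m2 j) (R2 j) (if b then upd_val (m1 u1) (R1 u1) d else d)).
split.
- exists g1, (upd_val (m1 u1) (R1 u1) d); split; [|split].
  + exists (fun i => l (st_p1 st i)), m1, u1; split; first exact: D1.
    split; last by split.
    by case: Hi => _ _ h1 _ _ i; rewrite h1; apply: Hg.
  + exists (fun j => cmpsrc (st_ord st) l (esf (st_p1 st) m1 u1) (Some (st_p2 st j))), m2, u2.
    split=> //; split; first by move=> j; exact: (guard2 Hi Hg u1 Hm1 j).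
    split=> //=.
    by rewrite He HP (R2'_P' Hi d u1 Hm1 Hm2).
  + move=> /Hc [hok heq]; split=> //=.
    by rewrite He HP -(R2'_P' Hi d u1 Hm1 Hm2); apply/(check_ok Hi Hg u1 Hm1 Hm2 u2).
- split=> //=.
  + by move=> i; rewrite ffunE HP (R1'_P' Hi d u1 m2 Hm1).
  + by move=> j; rewrite ffunE HP (R2'_P' Hi d u1 Hm1 Hm2).
  + by move=> x y; rewrite ffunE !HP; exact: (ord'_ok Hi Hg m1 u1 m2).
Qed.

Lemma stepB st P q1 R1 q2 R2 sg d g e q1' R1' q2' R2' :
  inv st P q1 R1 q2 R2 -> jstep q1 R1 q2 R2 (sg, d) (g, e) q1' R1' q2' R2' ->
  exists st' P', step (S:=prod_srt) st P (sg, d) (g, e) st' P' /\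
                 inv st' P' q1' R1' q2' R2'.
Proof.
move=> Hi [g1 [d1 [[l1 [m1 [u1 [D1 [G1 [E1 Ed1]]]]]] [[l2 [m2 [u2 [D2 [G2 [E2 Ee]]]]]] Hc]]]].
simpl in *.
have Hm1 := af1 D1; have Hm2 := af2 D2.
case: (Hi) => ? ? h1 h2 _; subst q1 q2.
pose l := fun x => cmp_of d (P x).
have Hl : forall x, guard_holds (l x) d (P x) := fun x => cmp_ofP d (P x).
have el1 : l1 = fun i => l (st_p1 st i).
  by apply: functional_extensionality => i; apply: guard_uniq (G1 i) _; rewrite h1.
have Ed1' : d1 = upd_val (m1 u1) (R1 u1) d by rewrite Ed1 E1.
have el2 : l2 = fun j => cmpsrc (st_ord st) l (esf (st_p1 st) m1 u1) (Some (st_p2 st j)).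
  apply: functional_extensionality => j; apply: guard_uniq (G2 j) _.
  by rewrite Ed1'; exact: (guard2 Hi Hl u1 Hm1 j).
subst l1 l2.
pose a0 := astar (st_p1 st) (st_p2 st) m1 u1 m2.
exists (q1', q2',
          [ffun i => odflt a0 (s1f (st_p1 st) m1 i)],
          [ffun j => odflt a0 (s2f (st_p1 st) (st_p2 st) m1 u1 m2 j)],
          [ffun ab => c2o (cmpsrc (st_ord st) l (srcP a0 ab.1) (srcP a0 ab.2))]),
       (Pnew a0 P d).
split.
- exists l, (fun a => if a == a0 then UNew else UOld),
    (odflt a0 (s2f (st_p1 st) (st_p2 st) m1 u1 m2 u2)).
  split; [|split; [exact: Hl|split; [by []|]]].
  + exists m1, u1, g1, q1', m2, u2, q2'.
    split; first exact: D1.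
    split; first exact: D2.
    split; last by [].
    move=> /Hc [hok heq]; split=> //.
    apply/(check_ok Hi Hl u1 Hm1 Hm2 u2).
    by rewrite -Ed1' -E2 -Ee.
  + by rewrite /= Ee E2 Ed1' (R2'_P' Hi d u1 Hm1 Hm2).
- split=> //=.
  + by move=> i; rewrite ffunE E1 (R1'_P' Hi d u1 m2 Hm1).
  + by move=> j; rewrite ffunE E2 Ed1' (R2'_P' Hi d u1 Hm1 Hm2).
  + by move=> x y; rewrite ffunE; exact: (ord'_ok Hi Hl m1 u1 m2).
Qed.

Lemma sim w : forall st P q1 R1 q2 R2, inv st P q1 R1 q2 R2 ->
  (runs_from (S:=prod_srt) st P w <-> jruns q1 R1 q2 R2 w).
Proof.
elim: w => [|[[sg d] [g e]] w IH] st P q1 R1 q2 R2 Hi /=; first by [].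
split.
- move=> [st' [P' [hs hr]]].
  have [q1' [R1' [q2' [R2' [hj hi']]]]] := stepA Hi hs.
  by exists q1', R1', q2', R2'; split=> //; apply/(IH _ _ _ _ _ _ hi').
- move=> [q1' [R1' [q2' [R2' [hj hr]]]]].
  have [st' [P' [hs hi']]] := stepB Hi hj.
  by exists st', P'; split=> //; apply/(IH _ _ _ _ _ _ hi').
Qed.

Lemma inv0 : inv pq0 P0 (srt_q0 M1) (srt_R0 M1) (srt_q0 M2) (srt_R0 M2).
Proof.
split=> //=.
- move=> i; rewrite ffunE /P0.
  have -> : \val (inord (\val i) : 'I_K) = val i.
    by apply: inordK; rewrite ltnS (leq_trans (ltnW (ltn_ord i))) // leq_addr.
  by rewrite insubT //= => h; congr (srt_R0 M1 _); apply: val_inj.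
- move=> j; rewrite ffunE /P0.
  have -> : \val (inord (k1 + \val j) : 'I_K) = k1 + val j.
    by apply: inordK; rewrite ltnS leq_add2l; exact: ltnW (ltn_ord j).
  rewrite insubF; last by rewrite ltnNge leq_addr.
  by rewrite addKn insubT //= => h; congr (srt_R0 M2 _); apply: val_inj.
- by move=> x y; rewrite ffunE c2oK; apply: cmp_ofP.
Qed.

Lemma prod_sem w : sem prod_srt w <-> jruns (srt_q0 M1) (srt_R0 M1) (srt_q0 M2) (srt_R0 M2) w.
Proof. exact: (sim w inv0). Qed.
End Product.

Lemma inter_jruns G (Sig Gam : Type) (M1 : srt G Sig Gam) (M2 : srt G Sig Gam) w :
  forall q1 R1 q2 R2,
  jruns (M1:=M1) (M2:=M2) (fun s _ => s) false true (@eq Gam) q1 R1 q2 R2 w <->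
  runs_from q1 R1 w /\ runs_from q2 R2 w.
Proof.
elim: w => [|[[sg d] [g e]] w IH] q1 R1 q2 R2 /=; first by [].
split.
- move=> [q1' [R1' [q2' [R2' [[g1 [d1 [h1 [h2 hc]]]] hr]]]]].
  have [eg ed] := hc erefl. simpl in *. subst g1 d1.
  have [r1 r2] := (IH _ _ _ _).1 hr.
  by split; [exists q1', R1' | exists q2', R2'].
- move=> [[q1' [R1' [h1 r1]]] [q2' [R2' [h2 r2]]]].
  exists q1', R1', q2', R2'; split; last by apply/IH.
  by exists g, e; split.
Qed.

Lemma comp_jruns G (Sig Gam Th : Type) (M1 : srt G Sig Gam) (M2 : srt G Gam Th) w :
  forall q1 R1 q2 R2,
  jruns (M1:=M1) (M2:=M2) (fun _ g => g) true false (fun _ _ => True) q1 R1 q2 R2 w <->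
  exists s3 : seq (Gam * G), size s3 = size w /\
    runs_from q1 R1 (zip (unzip1 w) s3) /\ runs_from q2 R2 (zip s3 (unzip2 w)).
Proof.
elim: w => [|[[sg d] [g e]] w IH] q1 R1 q2 R2 /=.
  by split=> // _; exists [::].
split.
- move=> [q1' [R1' [q2' [R2' [[g1 [d1 [h1 [h2 _]]]] hr]]]]].
  have [s3 [hs [r1 r2]]] := (IH _ _ _ _).1 hr.
  exists ((g1, d1) :: s3); split; first by rewrite /= hs.
  by split; [exists q1', R1' | exists q2', R2'].
- move=> [[|[g1 d1] s3] [hs H]]; first by [].
  move: H => /= [[q1' [R1' [h1 r1]]] [q2' [R2' [h2 r2]]]].
  exists q1', R1', q2', R2'; split.
    by exists g1, d1.
  by apply/IH; exists s3; split; [case: hs | split].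
Qed.

Definition Sb (G : linear_group) (bb : bool) : srt G unit bool :=
  @SRT G unit bool unit tt 1 (fun _ => lg_zero G)
    (fun q s l m u g q' => m = (fun _ => UNew) /\ g = bb).

Lemma Sb_dsrt G bb : DSRT_A (Sb G bb).
Proof.
split.
- move=> q1 s1 l1 m1 u1 g1 p1 q2 s2 l2 m2 u2 g2 p2 [h1 h1'] [h2 h2'] ne.
  right; right => el; apply: ne; subst.
  by case: q1; case: q2; case: s1; case: s2; case: p1; case: p2;
     rewrite (ord1 u1) (ord1 u2).
- by move=> q s l m u g p [-> _] i.
Qed.

Lemma Sb_word G bb :
  sem (Sb G bb) [:: ((tt, lg_zero G), (bb, lg_zero G))].
Proof.
exists tt, (fun _ => lg_zero G); split=> //.
exists (fun _ => CEq), (fun _ => UNew), ord0; split=> //.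
Qed.

Theorem theorem3p22 :
  (* closed under intersection *)
  (forall (G : linear_group) (Sigma Gamma : finType)
          (T1 T2 : transformation G Sigma Gamma),
      DSRT_A_definable T1 -> DSRT_A_definable T2 ->
      DSRT_A_definable (trans_inter T1 T2)) /\
  (* closed under composition *)
  (forall (G : linear_group) (Sigma Gamma Theta : finType)
          (T1 : transformation G Sigma Gamma)
          (T2 : transformation G Gamma Theta),
      DSRT_A_definable T1 -> DSRT_A_definable T2 ->
      DSRT_A_definable (trans_comp T1 T2)) /\
  (* not closed under union *)
  (forall G : linear_group, exists (Sigma Gamma : finType)
          (T1 T2 : transformation G Sigma Gamma),
      DSRT_A_definable T1 /\ DSRT_A_definable T2 /\
      ~ DSRT_A_definable (trans_union T1 T2)).
Proof.
split; [|split].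
- move=> G Sig Gam T1 T2 [S1 [[d1 a1] e1]] [S2 [[d2 a2] e2]].
  exists (prod_srt S1 S2 (fun s _ => s) false true (@eq Gam)); split.
    by split; [exact: (prod_det d1 d2) | exact: prod_af].
  move=> w.
  have h1 := prod_sem (M1:=S1) (M2:=S2) (fun s _ => s) false true (@eq Gam) a1 a2 w.
  have h2 := @inter_jruns _ _ _ S1 S2 w (srt_q0 S1) (srt_R0 S1) (srt_q0 S2) (srt_R0 S2).
  have h3 := e1 w; have h4 := e2 w.
  unfold sem, trans_inter in *; tauto.
- move=> G Sig Gam Th T1 T2 [S1 [[d1 a1] e1]] [S2 [[d2 a2] e2]].
  exists (prod_srt S1 S2 (fun _ g => g) true false (fun _ _ => True)); split.
    by split; [exact: (prod_det d1 d2) | exact: prod_af].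
  move=> w.
  have h1 := prod_sem (M1:=S1) (M2:=S2) (fun _ g => g) true false (fun _ _ => True) a1 a2 w.
  have h2 := @comp_jruns _ _ _ _ S1 S2 w (srt_q0 S1) (srt_R0 S1) (srt_q0 S2) (srt_R0 S2).
  split=> H.
  + apply/h1/h2; move: H => [s3 [hs [r1 r2]]]; exists s3; split=> //.
    by split; [apply/e1 | apply/e2].
  + have [s3 [hs [r1 r2]]] := h2.1 (h1.1 H).
    exists s3; split=> //.
    by split; [apply/e1 | apply/e2].
- move=> G; exists unit, bool, (sem (Sb G true)), (sem (Sb G false)).
  split; first by exists (Sb G true); split; [exact: Sb_dsrt|].
  split; first by exists (Sb G false); split; [exact: Sb_dsrt|].
  move=> [S [[dS aS] eS]].
  have w1 := (eS _).1 (or_introl (Sb_word G true)).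
  have w2 := (eS _).1 (or_intror (Sb_word G false)).
  case: w1 => q1 [R1 [[l1 [m1 [u1 [D1 [G1 _]]]]] _]].
  case: w2 => q2 [R2 [[l2 [m2 [u2 [D2 [G2 _]]]]] _]].
  simpl in *.
  have el : l1 = l2.
    by apply: functional_extensionality => i; apply: guard_uniq (G1 i) (G2 i).
  subst l2.
  by have [_ [_ [/= ? _]]] := det_eq dS D1 D2.
Qed.
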